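(* Let $Q\subset\mathbb{R}^3$ be a toroidal domain with universal cover $\widetilde{Q}$ and toroidal coordinates $(\zeta,x,y)$ on $\widetilde Q$. Let $\bm{B}$ be a toroidal vector field and $p$ a scalar function on $\widetilde{Q}$, with associated hypersurface pressure $p_\zeta$, toroidal flux $\varrho_\zeta$ and field-line velocity $\bm u_\zeta$ on $D$. The following are equivalent. (i) $(\bm B,p)$ solves $(\nabla\times\bm B)\times\bm B=\nabla p$, $\nabla\cdot\bm B=0$ on $\widetilde Q$, with $\bm B\cdot\bm n=0$ on $\partial\widetilde Q$ (all vector calculus with respect to $\widetilde g$, $\bm n$ the outward unit normal). (ii) For all $\zeta\in\mathbb{R}$, $\bm u_\zeta$ is tangent to $\partial D$, and $$\partial_\zeta p_\zeta+\mathcal{L}_{\bm u_\zeta}p_\zeta=0,\qquad \partial_\zeta\varrho_\zeta+\mathcal{L}_{\bm u_\zeta}\varrho_\zeta=0,$$ $$\partial_\zeta\pi_\zeta+\mathcal{L}_{\bm u_\zeta}\pi_\zeta=\frac{dp_\zeta}{n_\zeta}+d\Big(\frac{|\pi_\zeta|^2}{n_\zeta}+n_\zeta N_\zeta^2\Big),\quad \pi_\zeta=n_\zeta\,\iota_{\bm u_\zeta+\bm N_\zeta}h_\zeta,\quad n_\zeta=\frac{\varrho_\zeta}{\omega_\zeta}.$$ (iii) For all $\zeta$, $\bm u_\zeta$ is tangent to $\partial D$ and, in index notation on $D$ (indices $i,j\in\{x,y\}$, summation over repeated indices), $$\partial_\zeta p_\zeta+u^i_\zeta\partial_ip_\zeta=0,\qquad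 \partial_\zeta\big(n_\zeta N_\zeta\sqrt{\det h_\zeta}\big)+\partial_i\big(n_\zeta N_\zeta\sqrt{\det h_\zeta}\,u^i_\zeta\big)=0,$$ $$\partial_\zeta\pi_{\zeta\,i}+u^j_\zeta\partial_j\pi_{\zeta\,i}+\pi_{\zeta\,j}\partial_iu^j_\zeta=\frac{\partial_ip_\zeta}{n_\zeta}+\partial_i\Big(\frac{|\pi_\zeta|^2}{n_\zeta}+n_\zeta N_\zeta^2\Big),\quad \pi_{\zeta\,i}=n_\zeta h_{\zeta\,ij}(u^j_\zeta+N^j_\zeta).$$
   Context: $D\subset\mathbb{R}^2$ is the closed unit disc, $S^1=\mathbb{R}\bmod 2\pi$. A toroidal domain is a submanifold with boundary $Q\subset\mathbb{R}^3$ with an orientation-preserving diffeomorphism $(\zeta,x,y):Q\to S^1\times D$ (orientation $d\zeta\wedge dx\wedge dy$). $\widetilde{Q}$ is its universal cover with covering map $\mathcal P$, metric $\widetilde g=\mathcal P^*g$ ($g$ Euclidean), Riemannian volume form $\Omega$, and lifted coordinates $(\zeta,x,y):\widetilde Q\to\mathbb{R}\times D$. For $\zeta\in\mathbb{R}$, $I_\zeta(x,y)=(\zeta,x,y)$ viewed as a map $D\to\widetilde Q$. On $D$ define: hypersurface metric $h_\zeta=I_\zeta^*\widetilde g$; shift vector $\bm N_\zeta$ the vector field with $\iota_{\bm N_\zeta}h_\zeta=I_\zeta^*(\iota_{\partial_\zeta}\widetilde g)$; lapse function $N_\zeta$ with $N_\zeta^2=I_\zeta^*(\widetilde g(\partial_\zeta,\partial_\zeta))-h_\zeta(\bm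 N_\zeta,\bm N_\zeta)$; hypersurface area element $\omega_\zeta=I_\zeta^*(\iota_{\partial_\zeta}\Omega)$. $|\cdot|$ is the $h_\zeta$-norm on 1-forms, $\mathcal L$ Lie derivative, $d$ exterior derivative, $\iota$ interior product; $\varrho_\zeta/\omega_\zeta$ is the function $f$ with $\varrho_\zeta=f\omega_\zeta$. $\bm B$ is toroidal if $d\zeta(\bm B)>0$; then $p_\zeta=I_\zeta^*p$, $\varrho_\zeta=I_\zeta^*(\iota_{\bm B}\Omega)$ (nowhere vanishing), and $\bm u_\zeta$ is the vector field on $D$ with $\iota_{\bm u_\zeta}\varrho_\zeta=-I_\zeta^*(\iota_{\partial_\zeta}\iota_{\bm B}\Omega)$. *)

(* Defs.v *)
From Stdlib Require Import Reals ZArith List.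
From Coquelicot Require Import Coquelicot.
Open Scope R_scope.

(* Coordinates (zeta, x, y) on the universal cover  R x D.
   Index 3-type: iz = zeta, ix = x, iy = y.  Index 2-type on D: jx, jy. *)
Inductive I3 := iz | ix | iy.
Inductive I2 := jx | jy.
Definition emb (i : I2) : I3 := match i with jx => ix | jy => iy end.
Definition sum3 (f : I3 -> R) : R := f iz + f ix + f iy.
Definition sum2 (f : I2 -> R) : R := f jx + f jy.

Definition Fn3 := R -> R -> R -> R.

Definition inD (x y : R) : Prop := x ^ 2 + y ^ 2 <= 1.

Definition pd (a : I3) (f : Fn3) : Fn3 := fun z x y =>
  match a with
  | iz => Derive (fun t => f t x y) z
  | ix => Derive (fun t => f z t y) x
  | iy => Derive (fun t => f z x t) y
  end.
Definition ex_pd (a : I3) (f : Fn3) (z x y : R) : Prop :=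
  match a with
  | iz => ex_derive (fun t => f t x y) z
  | ix => ex_derive (fun t => f z t y) x
  | iy => ex_derive (fun t => f z x t) y
  end.
Fixpoint pdl (l : list I3) (f : Fn3) : Fn3 :=
  match l with nil => f | a :: l' => pd a (pdl l' f) end.

Definition smooth3 (f : Fn3) : Prop :=
  forall l : list I3,
    (forall a z x y, ex_pd a (pdl l f) z x y) /\
    (forall z x y, continuous
        (fun v : R * R * R => pdl l f (fst (fst v)) (snd (fst v)) (snd v)) (z, x, y)).

(* 3x3 linear algebra via cyclic cofactors *)
Definition succ3 (a : I3) : I3 := match a with iz => ix | ix => iy | iy => iz end.
Definition cof3 (A : I3 -> I3 -> R) (a b : I3) : R :=
  A (succ3 a) (succ3 b) * A (succ3 (succ3 a)) (succ3 (succ3 b))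
  - A (succ3 a) (succ3 (succ3 b)) * A (succ3 (succ3 a)) (succ3 b).
Definition det3 (A : I3 -> I3 -> R) : R := sum3 (fun b => A iz b * cof3 A iz b).
Definition inv3 (A : I3 -> I3 -> R) (a b : I3) : R := cof3 A b a / det3 A.
Definition det2 (A : I2 -> I2 -> R) : R := A jx jx * A jy jy - A jx jy * A jy jx.
Definition inv2 (A : I2 -> I2 -> R) (i j : I2) : R :=
  match i, j with
  | jx, jx => A jy jy / det2 A
  | jx, jy => - A jx jy / det2 A
  | jy, jx => - A jy jx / det2 A
  | jy, jy => A jx jx / det2 A
  end.

Definition eps (a b c : I3) : R :=
  match a, b, c with
  | iz, ix, iy | ix, iy, iz | iy, iz, ix => 1
  | iz, iy, ix | ix, iz, iy | iy, ix, iz => -1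
  | _, _, _ => 0
  end.

(* ---------- Toroidal domain ----------
   Phi k (k = iz,ix,iy labelling the three Euclidean coordinates of R^3) is the
   inverse of the toroidal coordinate map (zeta,x,y) : Q -> S^1 x D, lifted to
   R x D (and smoothly extended to R^3). *)
Definition toroidal_domain (Phi : I3 -> Fn3) : Prop :=
  (forall k, smooth3 (Phi k)) /\
  (forall k z x y, inD x y -> Phi k (z + 2 * PI) x y = Phi k z x y) /\
  (forall z x y z' x' y', inD x y -> inD x' y' ->
     (forall k, Phi k z x y = Phi k z' x' y') ->
     x = x' /\ y = y' /\ exists m : Z, z' = z + 2 * PI * IZR m) /\
  (forall z x y, inD x y ->
     det3 (fun k a => pd a (Phi k) z x y) > 0).

Definition gm (Phi : I3 -> Fn3) (a b : I3) : Fn3 := fun z x y =>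
  sum3 (fun k => pd a (Phi k) z x y * pd b (Phi k) z x y).
Definition gmat (Phi : I3 -> Fn3) (z x y : R) : I3 -> I3 -> R :=
  fun a b => gm Phi a b z x y.
(* sqrt(det g~): Riemannian volume form Omega = sqrtg dzeta/\dx/\dy *)
Definition sqrtg (Phi : I3 -> Fn3) : Fn3 := fun z x y => sqrt (det3 (gmat Phi z x y)).
Definition ginv (Phi : I3 -> Fn3) (a b : I3) : Fn3 := fun z x y =>
  inv3 (gmat Phi z x y) a b.

Definition lower (Phi : I3 -> Fn3) (V : I3 -> Fn3) (a : I3) : Fn3 := fun z x y =>
  sum3 (fun b => gm Phi a b z x y * V b z x y).
Definition dotg (Phi : I3 -> Fn3) (X Y : I3 -> Fn3) : Fn3 := fun z x y =>
  sum3 (fun a => sum3 (fun b => gm Phi a b z x y * X a z x y * Y b z x y)).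
Definition divg (Phi : I3 -> Fn3) (V : I3 -> Fn3) : Fn3 := fun z x y =>
  / sqrtg Phi z x y *
  sum3 (fun a => pd a (fun z' x' y' => sqrtg Phi z' x' y' * V a z' x' y') z x y).
Definition curlg (Phi : I3 -> Fn3) (V : I3 -> Fn3) (a : I3) : Fn3 := fun z x y =>
  / sqrtg Phi z x y *
  sum3 (fun b => sum3 (fun c => eps a b c * pd b (lower Phi V c) z x y)).
Definition crossg (Phi : I3 -> Fn3) (X Y : I3 -> Fn3) (a : I3) : Fn3 := fun z x y =>
  / sqrtg Phi z x y *
  sum3 (fun b => sum3 (fun c => eps a b c * lower Phi X b z x y * lower Phi Y c z x y)).
Definition gradg (Phi : I3 -> Fn3) (f : Fn3) (a : I3) : Fn3 := fun z x y =>
  sum3 (fun b => ginv Phi a b z x y * pd b f z x y).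
Definition rfun : Fn3 := fun _ x y => x ^ 2 + y ^ 2.
Definition normalg (Phi : I3 -> Fn3) (a : I3) : Fn3 := fun z x y =>
  gradg Phi rfun a z x y / sqrt (dotg Phi (gradg Phi rfun) (gradg Phi rfun) z x y).

Definition MHS (Phi : I3 -> Fn3) (B : I3 -> Fn3) (p : Fn3) : Prop :=
  (forall a z x y, inD x y -> crossg Phi (curlg Phi B) B a z x y = gradg Phi p a z x y) /\
  (forall z x y, inD x y -> divg Phi B z x y = 0) /\
  (forall z x y, x ^ 2 + y ^ 2 = 1 -> dotg Phi B (normalg Phi) z x y = 0).

Definition toroidal (B : I3 -> Fn3) : Prop :=
  forall z x y, inD x y -> B iz z x y > 0.

(* ---------- differential forms in coordinates ----------
   3D: 1-forms I3 -> Fn3, 2-forms (components w_{bc}) I3 -> I3 -> Fn3,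
   3-forms f dzeta/\dx/\dy given by the coefficient f.
   On D (parametrised by zeta): functions Fn3, vector fields / 1-forms I2 -> Fn3,
   2-forms c dx/\dy given by the coefficient c. *)
Definition dzeta_vec : I3 -> Fn3 := fun a _ _ _ =>
  match a with iz => 1 | _ => 0 end.
Definition iota3_3 (v : I3 -> Fn3) (f : Fn3) (b c : I3) : Fn3 := fun z x y =>
  sum3 (fun a => v a z x y * f z x y * eps a b c).
Definition iota3_2 (v : I3 -> Fn3) (w : I3 -> I3 -> Fn3) (c : I3) : Fn3 := fun z x y =>
  sum3 (fun a => v a z x y * w a c z x y).
Definition iota3_sym (v : I3 -> Fn3) (s : I3 -> I3 -> Fn3) (b : I3) : Fn3 := fun z x y =>
  sum3 (fun a => v a z x y * s a b z x y).
Definition pull1 (al : I3 -> Fn3) : I2 -> Fn3 := fun i => al (emb i).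
Definition pull2 (w : I3 -> I3 -> Fn3) : Fn3 := w ix iy.

Definition pdD (i : I2) (f : Fn3) : Fn3 := pd (emb i) f.
Definition dD0 (f : Fn3) : I2 -> Fn3 := fun i => pdD i f.
Definition dD1 (al : I2 -> Fn3) : Fn3 := fun z x y =>
  pdD jx (al jy) z x y - pdD jy (al jx) z x y.
Definition iotaD1 (u al : I2 -> Fn3) : Fn3 := fun z x y =>
  sum2 (fun i => u i z x y * al i z x y).
Definition iotaD2 (u : I2 -> Fn3) (c : Fn3) : I2 -> Fn3 := fun j z x y =>
  match j with jx => - (u jy z x y * c z x y) | jy => u jx z x y * c z x y end.
(* Lie derivatives via Cartan's formula L_u = iota_u d + d iota_u *)
Definition LieD0 (u : I2 -> Fn3) (f : Fn3) : Fn3 := iotaD1 u (dD0 f).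
Definition LieD1 (u al : I2 -> Fn3) : I2 -> Fn3 := fun i z x y =>
  iotaD2 u (dD1 al) i z x y + dD0 (iotaD1 u al) i z x y.
Definition LieD2 (u : I2 -> Fn3) (c : Fn3) : Fn3 := dD1 (iotaD2 u c).

Definition hD (Phi : I3 -> Fn3) (i j : I2) : Fn3 := gm Phi (emb i) (emb j).
Definition hmat (Phi : I3 -> Fn3) (z x y : R) : I2 -> I2 -> R :=
  fun i j => hD Phi i j z x y.
Definition hinv (Phi : I3 -> Fn3) (i j : I2) : Fn3 := fun z x y => inv2 (hmat Phi z x y) i j.
(* shift vector: the unique N with iota_N h = I^*(iota_{d_zeta} g~) *)
Definition shiftv (Phi : I3 -> Fn3) (i : I2) : Fn3 := fun z x y =>
  sum2 (fun j => hinv Phi i j z x y * pull1 (iota3_sym dzeta_vec (gm Phi)) j z x y).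
Definition hnorm2v (Phi : I3 -> Fn3) (V : I2 -> Fn3) : Fn3 := fun z x y =>
  sum2 (fun i => sum2 (fun j => hD Phi i j z x y * V i z x y * V j z x y)).
Definition lapse2 (Phi : I3 -> Fn3) : Fn3 := fun z x y =>
  gm Phi iz iz z x y - hnorm2v Phi (shiftv Phi) z x y.
Definition lapse (Phi : I3 -> Fn3) : Fn3 := fun z x y => sqrt (lapse2 Phi z x y).
Definition omegaD (Phi : I3 -> Fn3) : Fn3 := pull2 (iota3_3 dzeta_vec (sqrtg Phi)).
Definition rhoD (Phi : I3 -> Fn3) (B : I3 -> Fn3) : Fn3 := pull2 (iota3_3 B (sqrtg Phi)).
Definition nD (Phi : I3 -> Fn3) (B : I3 -> Fn3) : Fn3 := fun z x y =>
  rhoD Phi B z x y / omegaD Phi z x y.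
(* field-line velocity: the unique u with iota_u rho = - I^*(iota_{d_zeta} iota_B Omega);
   solving iotaD2 u rho = beta gives u^x = beta_y / rho, u^y = - beta_x / rho. *)
Definition betaD (Phi : I3 -> Fn3) (B : I3 -> Fn3) : I2 -> Fn3 := fun i z x y =>
  - pull1 (iota3_2 dzeta_vec (iota3_3 B (sqrtg Phi))) i z x y.
Definition uD (Phi : I3 -> Fn3) (B : I3 -> Fn3) (i : I2) : Fn3 := fun z x y =>
  match i with
  | jx => betaD Phi B jy z x y / rhoD Phi B z x y
  | jy => - betaD Phi B jx z x y / rhoD Phi B z x y
  end.
Definition piD (Phi : I3 -> Fn3) (B : I3 -> Fn3) (i : I2) : Fn3 := fun z x y =>
  nD Phi B z x y *
  sum2 (fun j => (uD Phi B j z x y + shiftv Phi j z x y) * hD Phi j i z x y).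
Definition hnorm2f (Phi : I3 -> Fn3) (al : I2 -> Fn3) : Fn3 := fun z x y =>
  sum2 (fun i => sum2 (fun j => hinv Phi i j z x y * al i z x y * al j z x y)).
Definition enerD (Phi : I3 -> Fn3) (B : I3 -> Fn3) : Fn3 := fun z x y =>
  hnorm2f Phi (piD Phi B) z x y / nD Phi B z x y + nD Phi B z x y * (lapse Phi z x y) ^ 2.

Definition u_tangent (Phi : I3 -> Fn3) (B : I3 -> Fn3) : Prop :=
  forall z x y, x ^ 2 + y ^ 2 = 1 ->
    x * uD Phi B jx z x y + y * uD Phi B jy z x y = 0.

Definition condII (Phi : I3 -> Fn3) (B : I3 -> Fn3) (p : Fn3) : Prop :=
  u_tangent Phi B /\
  forall z x y, inD x y ->
    pd iz p z x y + LieD0 (uD Phi B) p z x y = 0 /\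
    pd iz (rhoD Phi B) z x y + LieD2 (uD Phi B) (rhoD Phi B) z x y = 0 /\
    (forall i, pd iz (piD Phi B i) z x y + LieD1 (uD Phi B) (piD Phi B) i z x y
               = dD0 p i z x y / nD Phi B z x y + dD0 (enerD Phi B) i z x y).

Definition fluxdens (Phi : I3 -> Fn3) (B : I3 -> Fn3) : Fn3 := fun z x y =>
  nD Phi B z x y * lapse Phi z x y * sqrt (det2 (hmat Phi z x y)).
Definition condIII (Phi : I3 -> Fn3) (B : I3 -> Fn3) (p : Fn3) : Prop :=
  u_tangent Phi B /\
  forall z x y, inD x y ->
    pd iz p z x y + sum2 (fun i => uD Phi B i z x y * pdD i p z x y) = 0 /\
    pd iz (fluxdens Phi B) z x y
      + sum2 (fun i => pdD i (fun z' x' y' => fluxdens Phi B z' x' y' * uD Phi B i z' x' y') z x y)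
      = 0 /\
    (forall i,
       pd iz (piD Phi B i) z x y
       + sum2 (fun j => uD Phi B j z x y * pdD j (piD Phi B i) z x y)
       + sum2 (fun j => piD Phi B j z x y * pdD i (uD Phi B j) z x y)
       = pdD i p z x y / nD Phi B z x y + pdD i (enerD Phi B) z x y).

(* Main.v *)
Require Import Defs.
From Stdlib Require Import Reals Lra Psatz FunctionalExtensionality.
From Coquelicot Require Import Coquelicot.
Open Scope R_scope.

Definition locdir (a:I3) z x y (P : R->R->R->Prop) : Prop :=
  match a with
  | iz => locally z (fun t => P t x y)
  | ix => locally x (fun t => P z t y)
  | iy => locally y (fun t => P z x t)
  end.

Section E.
Variables (a : I3) (f g : Fn3) (z x y : R).

Lemma exd_plus : ex_pd a f z x y -> ex_pd a g z x y ->
  ex_pd a (fun z x y => f z x y + g z x y) z x y.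
Proof. destruct a; simpl; intros H1 H2; apply (ex_derive_plus _ _ _ H1 H2). Qed.
Lemma exd_minus : ex_pd a f z x y -> ex_pd a g z x y ->
  ex_pd a (fun z x y => f z x y - g z x y) z x y.
Proof. destruct a; simpl; intros H1 H2; apply (ex_derive_minus _ _ _ H1 H2). Qed.
Lemma exd_mult : ex_pd a f z x y -> ex_pd a g z x y ->
  ex_pd a (fun z x y => f z x y * g z x y) z x y.
Proof. destruct a; simpl; intros H1 H2; apply (ex_derive_mult _ _ _ H1 H2). Qed.
Lemma exd_div : ex_pd a f z x y -> ex_pd a g z x y -> g z x y <> 0 ->
  ex_pd a (fun z x y => f z x y / g z x y) z x y.
Proof. destruct a; simpl; intros H1 H2 H3; apply (ex_derive_div _ _ _ H1 H2 H3). Qed.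
Lemma exd_const c : ex_pd a (fun _ _ _ => c) z x y.
Proof. destruct a; simpl; apply ex_derive_const. Qed.

Lemma pd_plus : ex_pd a f z x y -> ex_pd a g z x y ->
  pd a (fun z x y => f z x y + g z x y) z x y = pd a f z x y + pd a g z x y.
Proof. destruct a; simpl; intros H1 H2; apply (Derive_plus _ _ _ H1 H2). Qed.
Lemma pd_mult : ex_pd a f z x y -> ex_pd a g z x y ->
  pd a (fun z x y => f z x y * g z x y) z x y = pd a f z x y * g z x y + f z x y * pd a g z x y.
Proof. destruct a; simpl; intros H1 H2; apply (Derive_mult _ _ _ H1 H2). Qed.
Lemma pd_opp :
  pd a (fun z x y => - f z x y) z x y = - pd a f z x y.
Proof. destruct a; simpl; apply Derive_opp. Qed.

Lemma pd_ext_loc : locdir a z x y (fun z x y => f z x y = g z x y) -> pd a f z x y = pd a g z x y.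
Proof. destruct a; simpl; intro H; apply Derive_ext_loc; exact H. Qed.
Lemma exd_ext_loc : locdir a z x y (fun z x y => f z x y = g z x y) -> ex_pd a f z x y -> ex_pd a g z x y.
Proof. destruct a; simpl; intro H; apply ex_derive_ext_loc; exact H. Qed.
End E.

Lemma locdir_imp a z x y (P Q : R->R->R->Prop) :
  (forall z x y, P z x y -> Q z x y) -> locdir a z x y P -> locdir a z x y Q.
Proof. intros H; destruct a; simpl; apply filter_imp; intros; apply H; auto. Qed.
Lemma locdir_and a z x y (P Q : R->R->R->Prop) :
  locdir a z x y P -> locdir a z x y Q -> locdir a z x y (fun z x y => P z x y /\ Q z x y).
Proof. destruct a; simpl; apply filter_and. Qed.

Lemma loc_nz (f : R -> R) t : ex_derive f t -> f t <> 0 -> locally t (fun s => f s <> 0).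
Proof.
  intros Hd Hn. apply ex_derive_continuous in Hd.
  apply (Hd (fun v => v <> 0)). assert (He: 0 < Rabs (f t)) by (apply Rabs_pos_lt; auto).
  exists (mkposreal _ He). intros v Hv. simpl in Hv.
  unfold ball in Hv; simpl in Hv; unfold AbsRing_ball, abs, minus, plus, opp in Hv; simpl in Hv.
  intro E. rewrite E in Hv. rewrite Rplus_0_l, Rabs_Ropp in Hv. lra.
Qed.

Lemma locdir_nz a f z x y : ex_pd a f z x y -> f z x y <> 0 -> locdir a z x y (fun z x y => f z x y <> 0).
Proof. destruct a; simpl; intros; apply (loc_nz (fun t => _)); auto. Qed.


Definition crossE (G: I3->I3->R) (Bv: I3->R) (D: I3->I3->R) (u:R) (b:I3) : R :=
  u * sum3 (fun c => sum3 (fun d => eps b c d * sum3 (fun e => G c e * (u * sum3 (fun f => sum3 (fun h => eps e f h * D f h)))) * sum3 (fun e => G d e * Bv e))).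

Lemma crossE_hom G Bv D u b : crossE G Bv D u b = u * u * crossE G Bv D 1 b.
Proof. unfold crossE, sum3; ring. Qed.

Lemma lowerCross G Bv D a :
  G ix iz = G iz ix -> G iy iz = G iz iy -> G iy ix = G ix iy ->
  sum3 (fun b => G a b * crossE G Bv D 1 b) = det3 G * sum3 (fun c => Bv c * (D c a - D a c)).
Proof.
  intros H1 H2 H3. destruct a; unfold crossE, det3, cof3, sum3; simpl; rewrite ?H1, ?H2, ?H3; ring.
Qed.

Lemma lowerGrad G dp a : det3 G <> 0 ->
  sum3 (fun b => G a b * sum3 (fun c => inv3 G b c * dp c)) = dp a.
Proof. intros H. destruct a; unfold inv3, det3, cof3, sum3 in *; simpl in *; field; exact H. Qed.

Lemma invLower G F b : det3 G <> 0 ->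
  sum3 (fun a => inv3 G b a * sum3 (fun c => G a c * F c)) = F b.
Proof. intros H. destruct b; unfold inv3, det3, cof3, sum3 in *; simpl in *; field; exact H. Qed.


Lemma gm_sym Phi a b : gm Phi a b = gm Phi b a.
Proof.
  apply functional_extensionality; intro z; apply functional_extensionality; intro x;
  apply functional_extensionality; intro y; unfold gm, sum3; ring.
Qed.

Ltac gsym Phi := rewrite ?(gm_sym Phi ix iz), ?(gm_sym Phi iy iz), ?(gm_sym Phi iy ix).

Section L.
Variables (Phi : I3 -> Fn3) (B : I3 -> Fn3) (z x y : R).
Hypothesis Hs : sqrtg Phi z x y <> 0.
Hypothesis Hb : B iz z x y <> 0.
Hypothesis Hh : det2 (hmat Phi z x y) <> 0.

Lemma LI_rho : rhoD Phi B z x y = B iz z x y * sqrtg Phi z x y.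
Proof. cbv [rhoD pull2 iota3_3 sum3 eps]; ring. Qed.

Lemma LI_n : nD Phi B z x y = B iz z x y.
Proof. cbv [nD rhoD omegaD pull2 iota3_3 sum3 eps dzeta_vec]; field; auto. Qed.

Lemma LI_ux : uD Phi B jx z x y = B ix z x y / B iz z x y.
Proof. cbv [uD betaD rhoD pull1 pull2 iota3_2 iota3_3 sum3 eps dzeta_vec emb]; field; auto. Qed.
Lemma LI_uy : uD Phi B jy z x y = B iy z x y / B iz z x y.
Proof. cbv [uD betaD rhoD pull1 pull2 iota3_2 iota3_3 sum3 eps dzeta_vec emb]; field; auto. Qed.

Lemma LI_urx : uD Phi B jx z x y * rhoD Phi B z x y = sqrtg Phi z x y * B ix z x y.
Proof. rewrite LI_ux, LI_rho; field; auto. Qed.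
Lemma LI_ury : uD Phi B jy z x y * rhoD Phi B z x y = sqrtg Phi z x y * B iy z x y.
Proof. rewrite LI_uy, LI_rho; field; auto. Qed.

Lemma LI_pi i : piD Phi B i z x y = lower Phi B (emb i) z x y.
Proof.
  unfold piD; rewrite LI_n. generalize Hh. destruct i;
  cbv [sum2 uD betaD rhoD pull1 pull2 iota3_2 iota3_3 sum3 eps dzeta_vec emb shiftv hinv inv2 hmat hD iota3_sym lower det2];
  gsym Phi; intro H; field; auto.
Qed.

Lemma LI_S : iotaD1 (uD Phi B) (piD Phi B) z x y =
  (B ix z x y * lower Phi B ix z x y + B iy z x y * lower Phi B iy z x y) / B iz z x y.
Proof. unfold iotaD1, sum2; rewrite LI_ux, LI_uy, !LI_pi; simpl; field; auto. Qed.

Lemma schur : lapse2 Phi z x y * det2 (hmat Phi z x y) = det3 (gmat Phi z x y).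
Proof.
  generalize Hh.
  cbv [lapse2 hnorm2v sum2 shiftv hinv inv2 hmat hD iota3_sym sum3 dzeta_vec emb pull1 det2 det3 cof3 gmat succ3];
  gsym Phi; intro H; field; auto.
Qed.

Hypothesis HL : 0 <= lapse2 Phi z x y.

Lemma LI_E : enerD Phi B z x y = lower Phi B iz z x y +
  (B ix z x y * lower Phi B ix z x y + B iy z x y * lower Phi B iy z x y) / B iz z x y.
Proof.
  unfold enerD, lapse. rewrite pow2_sqrt by exact HL. rewrite LI_n.
  cbv [hnorm2f sum2]. rewrite !LI_pi. generalize Hh.
  cbv [lapse2 hnorm2v sum2 shiftv hinv inv2 hmat hD iota3_sym sum3 dzeta_vec emb pull1 det2 lower];
  gsym Phi; intro H; field; auto.
Qed.
End L.

Definition dJ (Phi : I3 -> Fn3) z x y := det3 (fun k a => pd a (Phi k) z x y).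

Lemma detg_J Phi z x y : det3 (gmat Phi z x y) = (dJ Phi z x y)^2.
Proof. cbv [dJ det3 cof3 gmat gm sum3 succ3]; ring. Qed.

Lemma deth_pos Phi z x y : dJ Phi z x y <> 0 -> 0 < det2 (hmat Phi z x y).
Proof.
  intro H.
  set (a1 := pd ix (Phi iz) z x y). set (a2 := pd ix (Phi ix) z x y). set (a3 := pd ix (Phi iy) z x y).
  set (b1 := pd iy (Phi iz) z x y). set (b2 := pd iy (Phi ix) z x y). set (b3 := pd iy (Phi iy) z x y).
  assert (E: det2 (hmat Phi z x y) = (a2*b3-a3*b2)^2 + (a3*b1-a1*b3)^2 + (a1*b2-a2*b1)^2).
  { cbv [det2 hmat hD gm sum3 emb]. subst a1 a2 a3 b1 b2 b3. ring. }
  assert (E2: dJ Phi z x y = pd iz (Phi iz) z x y * (a2*b3-a3*b2) + pd iz (Phi ix) z x y * (a3*b1-a1*b3)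
     + pd iz (Phi iy) z x y * (a1*b2-a2*b1)).
  { cbv [dJ det3 cof3 sum3 succ3]. subst a1 a2 a3 b1 b2 b3. ring. }
  rewrite E. rewrite E2 in H.
  pose proof (pow2_ge_0 (a2*b3-a3*b2)). pose proof (pow2_ge_0 (a3*b1-a1*b3)). pose proof (pow2_ge_0 (a1*b2-a2*b1)).
  destruct (Req_dec (a2*b3-a3*b2) 0) as [e1|e1]; [|pose proof (pow2_gt_0 _ e1); lra].
  destruct (Req_dec (a3*b1-a1*b3) 0) as [e2|e2]; [|pose proof (pow2_gt_0 _ e2); lra].
  destruct (Req_dec (a1*b2-a2*b1) 0) as [e3|e3]; [|pose proof (pow2_gt_0 _ e3); lra].
  exfalso; apply H; rewrite e1, e2, e3; ring.
Qed.

Lemma sqrtg_sq Phi z x y : sqrtg Phi z x y * sqrtg Phi z x y = det3 (gmat Phi z x y).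
Proof. unfold sqrtg. apply sqrt_sqrt. rewrite detg_J. apply pow2_ge_0. Qed.

Lemma sqrtg_nz Phi z x y : dJ Phi z x y <> 0 -> sqrtg Phi z x y <> 0.
Proof.
  intros H E. pose proof (sqrtg_sq Phi z x y) as S. rewrite E, detg_J in S.
  apply H. nra.
Qed.

Lemma detg_nz Phi z x y : dJ Phi z x y <> 0 -> det3 (gmat Phi z x y) <> 0.
Proof. intros H. rewrite detg_J. apply pow_nonzero. auto. Qed.

Lemma lapse2_pos Phi z x y : dJ Phi z x y <> 0 -> 0 < lapse2 Phi z x y.
Proof.
  intros H. pose proof (deth_pos _ _ _ _ H) as H1.
  pose proof (schur Phi z x y (Rgt_not_eq _ _ H1)) as S. rewrite detg_J in S.
  assert (0 < dJ Phi z x y ^2) by (apply pow2_gt_0; auto). nra.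
Qed.

Lemma LI_flux Phi B z x y : dJ Phi z x y <> 0 -> fluxdens Phi B z x y = rhoD Phi B z x y.
Proof.
  intros H. pose proof (deth_pos _ _ _ _ H) as H1. pose proof (lapse2_pos _ _ _ _ H) as H2.
  unfold fluxdens, lapse. rewrite LI_n by (apply sqrtg_nz; auto). rewrite LI_rho.
  rewrite Rmult_assoc, <- sqrt_mult by lra. rewrite schur by lra. reflexivity.
Qed.


Section M.
Variables (Phi : I3 -> Fn3) (B : I3 -> Fn3) (p : Fn3).
Hypothesis HPhi : forall k, smooth3 (Phi k).
Hypothesis HB : forall a, smooth3 (B a).

Lemma exB a c z x y : ex_pd a (B c) z x y.
Proof. exact (proj1 (HB c nil) a z x y). Qed.
Lemma exJ a b k z x y : ex_pd a (pd b (Phi k)) z x y.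
Proof. exact (proj1 (HPhi k (cons b nil)) a z x y). Qed.

Ltac exd1 := lazymatch goal with
  | |- ex_pd _ (fun z x y => _ + _) _ _ _ => apply exd_plus
  | |- ex_pd _ (fun z x y => _ - _) _ _ _ => apply exd_minus
  | |- ex_pd _ (fun z x y => _ * _) _ _ _ => apply exd_mult
  | |- ex_pd _ (fun z x y => _ / _) _ _ _ => apply exd_div
  | |- ex_pd _ (pd _ (Phi _)) _ _ _ => apply exJ
  | |- ex_pd _ (fun z x y => pd _ (Phi _) z x y) _ _ _ => apply exJ
  | |- ex_pd _ (B _) _ _ _ => apply exB
  | |- ex_pd _ (fun z x y => B _ z x y) _ _ _ => apply exB
  end.
Ltac exd := repeat exd1.

Lemma ex_gm a b c z x y : ex_pd a (gm Phi b c) z x y.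
Proof. unfold gm, sum3. exd. Qed.
Lemma ex_lower a c z x y : ex_pd a (lower Phi B c) z x y.
Proof. unfold lower, sum3. exd; apply ex_gm. Qed.
Lemma ex_dJ a z x y : ex_pd a (dJ Phi) z x y.
Proof. cbv [dJ det3 cof3 sum3 succ3]. exd. Qed.

Definition good z x y := dJ Phi z x y <> 0 /\ B iz z x y <> 0.

Lemma near_good a z x y : dJ Phi z x y <> 0 -> B iz z x y <> 0 -> locdir a z x y good.
Proof.
  intros H1 H2. apply locdir_and; apply locdir_nz; auto; [apply ex_dJ | apply exB].
Qed.

Lemma good_facts z x y : good z x y ->
  sqrtg Phi z x y <> 0 /\ det2 (hmat Phi z x y) <> 0 /\ 0 <= lapse2 Phi z x y /\ B iz z x y <> 0.
Proof.
  intros [G1 G2]. split; [apply sqrtg_nz; auto|]. split; [apply Rgt_not_eq, deth_pos; auto|].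
  split; [apply Rlt_le, lapse2_pos; auto| auto].
Qed.

Definition Sf : Fn3 := fun z x y =>
  (B ix z x y * lower Phi B ix z x y + B iy z x y * lower Phi B iy z x y) / B iz z x y.

Section P.
Variables (z x y : R).
Hypothesis H1 : dJ Phi z x y <> 0.
Hypothesis H2 : B iz z x y <> 0.

Ltac loc := apply pd_ext_loc; eapply locdir_imp; [ | apply (near_good _ z x y H1 H2) ];
  let z' := fresh "z" in let x' := fresh "x" in let y' := fresh "y" in let G := fresh "G" in
  intros z' x' y' G; destruct (good_facts _ _ _ G) as (F1 & F2 & F3 & F4).
Ltac locex := eapply exd_ext_loc; [ eapply locdir_imp; [ | apply (near_good _ z x y H1 H2) ];
  let z' := fresh "z" in let x' := fresh "x" in let y' := fresh "y" in let G := fresh "G" in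
  intros z' x' y' G; destruct (good_facts _ _ _ G) as (F1 & F2 & F3 & F4) | ].

Lemma exSf a : ex_pd a Sf z x y.
Proof. unfold Sf. apply exd_div; [ | apply exB | auto]. exd; apply ex_lower. Qed.

Lemma K1 a i : pd a (piD Phi B i) z x y = pd a (lower Phi B (emb i)) z x y.
Proof. loc. apply LI_pi; auto. Qed.

Lemma K2 a : pd a (iotaD1 (uD Phi B) (piD Phi B)) z x y = pd a Sf z x y.
Proof. loc. unfold Sf. apply LI_S; auto. Qed.

Lemma K3 a : pd a (enerD Phi B) z x y = pd a (lower Phi B iz) z x y + pd a Sf z x y.
Proof.
  rewrite <- (pd_plus a (lower Phi B iz) Sf); [ | apply ex_lower | apply exSf].
  loc. unfold Sf. apply LI_E; auto.
Qed.

Definition sgB (a : I3) : Fn3 := fun z x y => sqrtg Phi z x y * B a z x y.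

Lemma K4 : pd iz (rhoD Phi B) z x y + LieD2 (uD Phi B) (rhoD Phi B) z x y =
  pd iz (sgB iz) z x y + pd ix (sgB ix) z x y + pd iy (sgB iy) z x y.
Proof.
  cbv [LieD2 dD1 pdD emb iotaD2]. rewrite pd_opp.
  assert (E1: pd iz (rhoD Phi B) z x y = pd iz (sgB iz) z x y) by (loc; unfold sgB; rewrite LI_rho; ring).
  assert (E2: pd ix (fun z x y => uD Phi B jx z x y * rhoD Phi B z x y) z x y = pd ix (sgB ix) z x y)
    by (loc; unfold sgB; apply LI_urx; auto).
  assert (E3: pd iy (fun z x y => uD Phi B jy z x y * rhoD Phi B z x y) z x y = pd iy (sgB iy) z x y)
    by (loc; unfold sgB; apply LI_ury; auto).
  rewrite E1, E2, E3. ring.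
Qed.

Lemma K5 : pd iz (fluxdens Phi B) z x y
      + sum2 (fun i => pdD i (fun z' x' y' => fluxdens Phi B z' x' y' * uD Phi B i z' x' y') z x y) =
  pd iz (sgB iz) z x y + pd ix (sgB ix) z x y + pd iy (sgB iy) z x y.
Proof.
  cbv [sum2 pdD emb].
  assert (E1: pd iz (fluxdens Phi B) z x y = pd iz (sgB iz) z x y)
    by (loc; unfold sgB; rewrite LI_flux, LI_rho by (destruct G; auto); ring).
  assert (E2: pd ix (fun z x y => fluxdens Phi B z x y * uD Phi B jx z x y) z x y = pd ix (sgB ix) z x y)
    by (loc; unfold sgB; rewrite LI_flux by (destruct G; auto); rewrite Rmult_comm; apply LI_urx; auto).
  assert (E3: pd iy (fun z x y => fluxdens Phi B z x y * uD Phi B jy z x y) z x y = pd iy (sgB iy) z x y)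
    by (loc; unfold sgB; rewrite LI_flux by (destruct G; auto); rewrite Rmult_comm; apply LI_ury; auto).
  rewrite E1, E2, E3. ring.
Qed.

Lemma K6u a j : ex_pd a (uD Phi B j) z x y.
Proof.
  destruct j.
  - apply (exd_ext_loc a (fun z x y => B ix z x y / B iz z x y)).
    + eapply locdir_imp; [ | apply (near_good _ z x y H1 H2) ]. intros z' x' y' G.
      destruct (good_facts _ _ _ G) as (F1 & F2 & F3 & F4). symmetry; apply LI_ux; auto.
    + apply exd_div; auto; apply exB.
  - apply (exd_ext_loc a (fun z x y => B iy z x y / B iz z x y)).
    + eapply locdir_imp; [ | apply (near_good _ z x y H1 H2) ]. intros z' x' y' G.
      destruct (good_facts _ _ _ G) as (F1 & F2 & F3 & F4). symmetry; apply LI_uy; auto.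
    + apply exd_div; auto; apply exB.
Qed.

Lemma K6p a j : ex_pd a (piD Phi B j) z x y.
Proof.
  apply (exd_ext_loc a (lower Phi B (emb j))).
  + eapply locdir_imp; [ | apply (near_good _ z x y H1 H2) ]. intros z' x' y' G.
    destruct (good_facts _ _ _ G) as (F1 & F2 & F3 & F4). symmetry; apply LI_pi; auto.
  + apply ex_lower.
Qed.

Ltac exup := lazymatch goal with
  | |- ex_pd _ (uD _ _ _) _ _ _ => apply K6u
  | |- ex_pd _ (piD _ _ _) _ _ _ => apply K6p
  | |- ex_pd _ (fun z x y => uD _ _ ?j z x y) _ _ _ => apply (K6u _ j)
  | |- ex_pd _ (fun z x y => piD _ _ ?j z x y) _ _ _ => apply (K6p _ j)
  end.

Lemma K7 i : LieD1 (uD Phi B) (piD Phi B) i z x y =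
  sum2 (fun j => uD Phi B j z x y * pdD j (piD Phi B i) z x y)
  + sum2 (fun j => piD Phi B j z x y * pdD i (uD Phi B j) z x y).
Proof.
  unfold LieD1, dD0, iotaD1, sum2 at 1. unfold pdD at 1.
  rewrite (pd_plus (emb i) (fun z x y => uD Phi B jx z x y * piD Phi B jx z x y)
                          (fun z x y => uD Phi B jy z x y * piD Phi B jy z x y))
    by (apply exd_mult; exup).
  rewrite !pd_mult by exup.
  destruct i; cbv [iotaD2 dD1 sum2 pdD emb]; ring.
Qed.
End P.

Section P2.
Variables (z x y : R).
Hypothesis H1 : dJ Phi z x y <> 0.
Hypothesis H2 : B iz z x y <> 0.

Definition Fres (b : I3) := crossg Phi (curlg Phi B) B b z x y - gradg Phi p b z x y.
Definition lowRes (a : I3) := sum3 (fun c => B c z x y * (pd c (lower Phi B a) z x y - pd a (lower Phi B c) z x y))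
   - pd a p z x y.

Lemma gmat_sym a b : gmat Phi z x y a b = gmat Phi z x y b a.
Proof. unfold gmat. rewrite gm_sym. reflexivity. Qed.

Lemma R1 a : sum3 (fun b => gmat Phi z x y a b * Fres b) = lowRes a.
Proof.
  set (G := gmat Phi z x y). set (u := / sqrtg Phi z x y).
  set (Bv := fun c => B c z x y). set (Dl := fun a c => pd a (lower Phi B c) z x y).
  set (dp := fun c => pd c p z x y).
  assert (E: forall b, Fres b = crossE G Bv Dl u b - sum3 (fun c => inv3 G b c * dp c)) by (intro; reflexivity).
  assert (E2: sum3 (fun b => G a b * Fres b) = u * u * sum3 (fun b => G a b * crossE G Bv Dl 1 b)
      - sum3 (fun b => G a b * sum3 (fun c => inv3 G b c * dp c))).
  { unfold sum3 at 1 2 3. rewrite !E. rewrite !(crossE_hom G Bv Dl u). ring. }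
  rewrite E2. rewrite lowerCross by apply gmat_sym. rewrite lowerGrad by (apply detg_nz; auto).
  assert (Eu : u * u * det3 G = 1).
  { unfold u, G. rewrite <- sqrtg_sq. field. apply sqrtg_nz; auto. }
  unfold lowRes. rewrite <- Rmult_assoc, Eu. unfold Bv, Dl, dp. ring.
Qed.

Lemma R2 i : B iz z x y * ((pd iz (piD Phi B i) z x y + LieD1 (uD Phi B) (piD Phi B) i z x y)
    - (dD0 p i z x y / nD Phi B z x y + dD0 (enerD Phi B) i z x y)) = lowRes (emb i).
Proof.
  unfold LieD1. unfold dD0 at 1 2 3. unfold pdD at 1 2 3.
  rewrite K2, K3, LI_n by (auto; apply sqrtg_nz; auto).
  unfold dD1, pdD.
  destruct i; cbv [iotaD2 emb lowRes sum3]; rewrite ?LI_ux, ?LI_uy by (auto; apply sqrtg_nz; auto);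
  rewrite !K1 by auto; cbv [emb]; field; auto.
Qed.

Lemma R3 : B iz z x y * (pd iz p z x y + LieD0 (uD Phi B) p z x y) = sum3 (fun c => B c z x y * pd c p z x y).
Proof.
  cbv [LieD0 iotaD1 dD0 pdD sum2 sum3 emb].
  rewrite LI_ux, LI_uy by (auto; apply sqrtg_nz; auto). field; auto.
Qed.

Lemma R4 : sum3 (fun a => B a z x y * lowRes a) = - sum3 (fun c => B c z x y * pd c p z x y).
Proof. cbv [lowRes sum3]. ring. Qed.

Lemma R5 : sqrtg Phi z x y * divg Phi B z x y =
  pd iz (sgB iz) z x y + pd ix (sgB ix) z x y + pd iy (sgB iy) z x y.
Proof. unfold divg, sum3, sgB. field. apply sqrtg_nz; auto. Qed.

End P2.

Lemma pdr_z z x y : pd iz rfun z x y = 0.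
Proof. simpl. unfold rfun. apply Derive_const. Qed.
Lemma pdr_x z x y : pd ix rfun z x y = 2 * x.
Proof. simpl. unfold rfun. apply is_derive_unique. auto_derive; [auto | ring]. Qed.
Lemma pdr_y z x y : pd iy rfun z x y = 2 * y.
Proof. simpl. unfold rfun. apply is_derive_unique. auto_derive; [auto | ring]. Qed.

Section P3.
Variables (z x y : R).
Hypothesis H1 : dJ Phi z x y <> 0.
Hypothesis H2 : B iz z x y <> 0.
Hypothesis Hc : x ^ 2 + y ^ 2 = 1.

Lemma Gw a : sum3 (fun b => gm Phi a b z x y * gradg Phi rfun b z x y) = pd a rfun z x y.
Proof.
  exact (lowerGrad (gmat Phi z x y) (fun c => pd c rfun z x y) a (detg_nz _ _ _ _ H1)).
Qed.

Lemma Qpos : 0 < dotg Phi (gradg Phi rfun) (gradg Phi rfun) z x y.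
Proof.
  pose proof (Gw iz) as E1. pose proof (Gw ix) as E2. pose proof (Gw iy) as E3.
  rewrite pdr_z in E1. rewrite pdr_x in E2. rewrite pdr_y in E3.
  unfold dotg. cbv [gm sum3] in *.
  set (w1 := gradg Phi rfun iz z x y) in *. set (w2 := gradg Phi rfun ix z x y) in *.
  set (w3 := gradg Phi rfun iy z x y) in *.
  set (v1 := pd iz (Phi iz) z x y * w1 + pd ix (Phi iz) z x y * w2 + pd iy (Phi iz) z x y * w3).
  set (v2 := pd iz (Phi ix) z x y * w1 + pd ix (Phi ix) z x y * w2 + pd iy (Phi ix) z x y * w3).
  set (v3 := pd iz (Phi iy) z x y * w1 + pd ix (Phi iy) z x y * w2 + pd iy (Phi iy) z x y * w3).
  assert (EQ: forall a, (pd a (Phi iz) z x y * pd iz (Phi iz) z x y + pd a (Phi ix) z x y * pd iz (Phi ix) z x y +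
        pd a (Phi iy) z x y * pd iz (Phi iy) z x y) * w1 +
       (pd a (Phi iz) z x y * pd ix (Phi iz) z x y + pd a (Phi ix) z x y * pd ix (Phi ix) z x y +
        pd a (Phi iy) z x y * pd ix (Phi iy) z x y) * w2 +
       (pd a (Phi iz) z x y * pd iy (Phi iz) z x y + pd a (Phi ix) z x y * pd iy (Phi ix) z x y +
        pd a (Phi iy) z x y * pd iy (Phi iy) z x y) * w3 =
       pd a (Phi iz) z x y * v1 + pd a (Phi ix) z x y * v2 + pd a (Phi iy) z x y * v3)
   by (intro; unfold v1, v2, v3; ring).
  rewrite EQ in E2, E3.
  match goal with |- 0 < ?Q => replace Q with (v1^2 + v2^2 + v3^2) by (unfold v1, v2, v3; ring) end.
  pose proof (pow2_ge_0 v1). pose proof (pow2_ge_0 v2). pose proof (pow2_ge_0 v3).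
  destruct (Req_dec v1 0) as [e1|e1]; [|pose proof (pow2_gt_0 _ e1); lra].
  destruct (Req_dec v2 0) as [e2|e2]; [|pose proof (pow2_gt_0 _ e2); lra].
  destruct (Req_dec v3 0) as [e3|e3]; [|pose proof (pow2_gt_0 _ e3); lra].
  exfalso. rewrite e1, e2, e3 in E2, E3. nra.
Qed.

Lemma R6 : dotg Phi B (normalg Phi) z x y = 0 <-> x * uD Phi B jx z x y + y * uD Phi B jy z x y = 0.
Proof.
  pose proof Qpos as Q. set (q := dotg Phi (gradg Phi rfun) (gradg Phi rfun) z x y) in *.
  assert (Sq : 0 < sqrt q) by (apply sqrt_lt_R0; auto).
  assert (E: dotg Phi B (normalg Phi) z x y = 2 * (x * B ix z x y + y * B iy z x y) / sqrt q).
  { pose proof (Gw iz) as E1. pose proof (Gw ix) as E2. pose proof (Gw iy) as E3.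
    rewrite pdr_z in E1. rewrite pdr_x in E2. rewrite pdr_y in E3.
    cbv [dotg normalg sum3] in *. fold q.
    rewrite ?(gm_sym Phi ix iz), ?(gm_sym Phi iy iz), ?(gm_sym Phi iy ix) in *.
    apply (Rmult_eq_reg_r (sqrt q)); [|lra].
    field_simplify; [|lra|lra].
    match goal with |- ?L = _ => transitivity (B iz z x y * (gm Phi iz iz z x y * gradg Phi rfun iz z x y + gm Phi iz ix z x y * gradg Phi rfun ix z x y +
      gm Phi iz iy z x y * gradg Phi rfun iy z x y) + B ix z x y * (gm Phi iz ix z x y * gradg Phi rfun iz z x y +
     gm Phi ix ix z x y * gradg Phi rfun ix z x y + gm Phi ix iy z x y * gradg Phi rfun iy z x y) +
     B iy z x y * (gm Phi iz iy z x y * gradg Phi rfun iz z x y + gm Phi ix iy z x y * gradg Phi rfun ix z x y +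
     gm Phi iy iy z x y * gradg Phi rfun iy z x y)) end.
    - ring.
    - rewrite E1, E2, E3. ring. }
  rewrite E, LI_ux, LI_uy by (auto; apply sqrtg_nz; auto).
  split; intro K.
  - assert (x * B ix z x y + y * B iy z x y = 0).
    { replace (x * B ix z x y + y * B iy z x y) with (sqrt q / 2 * (2 * (x * B ix z x y + y * B iy z x y) / sqrt q)) by (field; lra).
      rewrite K; ring. }
    replace (x * (B ix z x y / B iz z x y) + y * (B iy z x y / B iz z x y)) with ((x * B ix z x y + y * B iy z x y) / B iz z x y) by (field; auto).
    rewrite H. unfold Rdiv; ring.
  - assert (x * B ix z x y + y * B iy z x y = 0).
    { replace (x * B ix z x y + y * B iy z x y) with (B iz z x y * (x * (B ix z x y / B iz z x y) + y * (B iy z x y / B iz z x y))) by (field; auto).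
      rewrite K; ring. }
    rewrite H. unfold Rdiv; ring.
Qed.
End P3.

Lemma main_equiv (Hdet : forall z x y, inD x y -> dJ Phi z x y > 0) (Htor : toroidal B) :
  (MHS Phi B p <-> condII Phi B p) /\ (condII Phi B p <-> condIII Phi B p).
Proof.
  assert (G1 : forall z x y, inD x y -> dJ Phi z x y <> 0) by (intros; apply Rgt_not_eq; auto).
  assert (G2 : forall z x y, inD x y -> B iz z x y <> 0) by (intros; apply Rgt_not_eq; apply Htor; auto).
  assert (Bd : forall x y : R, x ^ 2 + y ^ 2 = 1 -> inD x y) by (intros; unfold inD; lra).
  split; split.
  - intros [Mf [Md Mb]]. split.
    + intros z x y Hc. apply (R6 z x y (G1 z _ _ (Bd _ _ Hc)) (G2 z _ _ (Bd _ _ Hc)) Hc). apply Mb; auto.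
    + intros z x y hin. pose proof (G1 z _ _ hin) as H1. pose proof (G2 z _ _ hin) as H2.
      assert (L : forall a, lowRes z x y a = 0).
      { intro a. rewrite <- R1 by auto. unfold Fres.
        unfold sum3; rewrite !Mf by auto. ring. }
      split; [|split].
      * pose proof (R3 z x y H1 H2) as E. pose proof (R4 z x y) as E4.
        cbv [sum3] in E, E4. rewrite !L in E4.
        apply (Rmult_eq_reg_l (B iz z x y)); auto. lra.
      * rewrite K4 by auto. rewrite <- R5 by auto. rewrite Md by auto. ring.
      * intro i. pose proof (R2 z x y H1 H2 i) as E. rewrite L in E.
        apply Rminus_diag_uniq. apply (Rmult_eq_reg_l (B iz z x y)); auto. rewrite E. ring.
  - intros [Ht Hall]. split; [|split].
    + intros a z x y hin. pose proof (G1 z _ _ hin) as H1. pose proof (G2 z _ _ hin) as H2.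
      destruct (Hall z x y hin) as (HP & HC & HE).
      assert (Lx : lowRes z x y ix = 0).
      { pose proof (R2 z x y H1 H2 jx) as E. simpl emb in E. rewrite (HE jx) in E. rewrite <- E. ring. }
      assert (Ly : lowRes z x y iy = 0).
      { pose proof (R2 z x y H1 H2 jy) as E. simpl emb in E. rewrite (HE jy) in E. rewrite <- E. ring. }
      assert (Lz : lowRes z x y iz = 0).
      { pose proof (R4 z x y) as E. rewrite <- (R3 z x y H1 H2) in E. rewrite HP in E.
        cbv [sum3] in E. rewrite Lx, Ly in E.
        apply (Rmult_eq_reg_l (B iz z x y)); auto. lra. }
      assert (F0 : Fres z x y a = 0).
      { rewrite <- (invLower (gmat Phi z x y) (Fres z x y) a) by (apply detg_nz; auto).
        unfold sum3 at 1. rewrite !R1 by auto. rewrite Lx, Ly, Lz. ring. }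
      unfold Fres in F0. lra.
    + intros z x y hin. pose proof (G1 z _ _ hin) as H1. pose proof (G2 z _ _ hin) as H2.
      destruct (Hall z x y hin) as (HP & HC & HE).
      apply (Rmult_eq_reg_l (sqrtg Phi z x y)); [|apply sqrtg_nz; auto].
      rewrite R5 by auto. rewrite <- K4 by auto. rewrite HC. ring.
    + intros z x y Hc. apply (R6 z x y (G1 z _ _ (Bd _ _ Hc)) (G2 z _ _ (Bd _ _ Hc)) Hc). apply Ht; auto.
  - intros [Ht Hall]. split; [exact Ht|]. intros z x y hin.
    pose proof (G1 z _ _ hin) as H1. pose proof (G2 z _ _ hin) as H2.
    destruct (Hall z x y hin) as (HP & HC & HE). split; [exact HP|split].
    + rewrite K5 by auto. rewrite <- K4 by auto. exact HC.
    + intro i. rewrite Rplus_assoc, <- K7 by auto. apply HE.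
  - intros [Ht Hall]. split; [exact Ht|]. intros z x y hin.
    pose proof (G1 z _ _ hin) as H1. pose proof (G2 z _ _ hin) as H2.
    destruct (Hall z x y hin) as (HP & HC & HE). split; [exact HP|split].
    + rewrite K4 by auto. rewrite <- K5 by auto. exact HC.
    + intro i. rewrite K7 by auto. rewrite <- Rplus_assoc. apply HE.
Qed.
End M.

Theorem theorem1 (Phi : I3 -> Fn3) (B : I3 -> Fn3) (p : Fn3) :
  toroidal_domain Phi ->
  (forall a, smooth3 (B a)) -> smooth3 p ->
  toroidal B ->
  (MHS Phi B p <-> condII Phi B p) /\ (condII Phi B p <-> condIII Phi B p).
Proof.
  intros [HPhi [_ [_ Hdet]]] HB _ Htor.
  apply main_equiv; auto.
Qed.
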